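(* Let $L$ be an ideal lattice. A support datum $(X,\sigma)$ on $L$ is classifying if and only if the canonical morphism $f\colon(X,\sigma)\to(\operatorname{Spec}^*L,\operatorname{supp})$ (the unique continuous map with $\sigma(a)=f^{-1}(\operatorname{supp}(a))$ for compact $a$) is a homeomorphism.
   Context: An ideal lattice is a poset $(L,\leq)$ with an associative multiplication such that: (L1) $L$ is a complete lattice; (L2) every element is a supremum of compact elements ($a$ is compact if $a\leq\sup A$ implies $a\leq\sup A'$ for some finite $A'\subseteq A$); (L3) multiplication distributes over binary joins on both sides; (L4) $1=\sup L$ is compact and is a two-sided identity; (L5) products of compact elements are compact. Prime: $p\neq1$ with $ab\leq p\Rightarrow a\leq p$ or $b\leq p$; semi-prime: $bb\leq a\Rightarrow b\leq a$. $\operatorname{Spec}^*L$ is the set of primes with the topology whose open sets are unions of sets whose complements are quasi-compact open in the Zariski topology (Zariski closed sets being $V(a)=\{p\mid a\leq p\}$); $\operatorname{supp}(a)=\{p\mid a\not\leq p\}$. A support datum on $L$ is a pair $(X,\sigma)$, $X$ a space, $\sigma$ assigning to each compact $a$ a closed subset with $\sigma(a\vee b)=\sigma(a)\cup\sigma(b)$, $\sigma(1)=X$, $\sigma(ab)=\sigma(a)\cap\sigma(b)$. It is classifying if $X$ is spectral ($T_0$, quasi-compact, quasi-compact opens closed under finite intersections and forming a basis, generic points for non-empty irreducible closed sets) and $a\mapsto\bigcup_{b\leq a\text{ compact}}\sigma(b)$, $Y\mapsto\bigvee_{b\text{ compact},\sigma(b)\subseteq Y}b$ give mutually inverse bijections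 between semi-primes of $L$ and subsets $Y=\bigcup_iY_i\subseteq X$ with each $X\setminus Y_i$ quasi-compact open. *)

(* Defs.v *)
From Stdlib Require Import List.
Import ListNotations.
Set Implicit Arguments.

Section Generic.
Variables (T : Type) (le : T -> T -> Prop) (sup : (T -> Prop) -> T).

Definition gjoin (a b : T) : T := sup (fun x => x = a \/ x = b).
Definition gtop : T := sup (fun _ => True).

Definition gcompact (a : T) : Prop :=
  forall A : T -> Prop, le a (sup A) ->
    exists l : list T, (forall x, In x l -> A x) /\ le a (sup (fun x => In x l)).

Definition ideal_lattice_axioms (mul : T -> T -> T) : Prop :=
  (forall a, le a a) /\
  (forall a b c, le a b -> le b c -> le a c) /\
  (forall a b, le a b -> le b a -> a = b) /\
  (forall (A : T -> Prop) a, A a -> le a (sup A)) /\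
  (forall (A : T -> Prop) b, (forall a, A a -> le a b) -> le (sup A) b) /\
  (forall a b c, mul a (mul b c) = mul (mul a b) c) /\
  (forall a, exists A : T -> Prop, (forall c, A c -> gcompact c) /\ a = sup A) /\
  (forall a b c, mul a (gjoin b c) = gjoin (mul a b) (mul a c)) /\
  (forall a b c, mul (gjoin a b) c = gjoin (mul a c) (mul b c)) /\
  gcompact gtop /\
  (forall a, mul gtop a = a) /\ (forall a, mul a gtop = a) /\
  (forall a b, gcompact a -> gcompact b -> gcompact (mul a b)).
End Generic.

Record IdealLattice := {
  IL :> Type;
  ile : IL -> IL -> Prop;
  imul : IL -> IL -> IL;
  isup : (IL -> Prop) -> IL;
  il_ax : ideal_lattice_axioms ile isup imul
}.
Arguments ile {_} _ _.
Arguments imul {_} _ _.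
Arguments isup {_} _.

Section LatticeNotions.
Variable L : IdealLattice.

Definition join (a b : L) : L := gjoin (@isup L) a b.
Definition top : L := gtop (@isup L).
Definition compact (a : L) : Prop := gcompact (@ile L) (@isup L) a.

Definition prime (p : L) : Prop :=
  p <> top /\ forall a b : L, ile (imul a b) p -> ile a p \/ ile b p.

Definition semiprime (a : L) : Prop :=
  forall b : L, ile (imul b b) a -> ile b a.

Definition Spec : Type := { p : L | prime p }.

Definition supp (a : L) : Spec -> Prop := fun p => ~ ile a (proj1_sig p).
Definition Vz (a : L) : Spec -> Prop := fun p => ile a (proj1_sig p).
End LatticeNotions.
Arguments join {L} _ _.
Arguments compact {L} _.
Arguments prime {L} _.
Arguments semiprime {L} _.
Arguments supp {L} _ _.
Arguments Vz {L} _ _.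

Section Topology.
Variables (X : Type) (op : (X -> Prop) -> Prop).

Definition is_topology : Prop :=
  op (fun _ => True) /\
  (forall U V, op U -> op V -> op (fun x => U x /\ V x)) /\
  (forall F : (X -> Prop) -> Prop, (forall U, F U -> op U) ->
      op (fun x => exists U, F U /\ U x)).

Definition compl (S : X -> Prop) : X -> Prop := fun x => ~ S x.
Definition closed (C : X -> Prop) : Prop := op (compl C).
Definition subset (S S' : X -> Prop) : Prop := forall x, S x -> S' x.

Definition quasi_compact (S : X -> Prop) : Prop :=
  forall F : (X -> Prop) -> Prop, (forall U, F U -> op U) ->
    (forall x, S x -> exists U, F U /\ U x) ->
    exists l : list (X -> Prop), (forall U, In U l -> F U) /\
      (forall x, S x -> exists U, In U l /\ U x).

Definition closure (S : X -> Prop) : X -> Prop :=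
  fun y => forall C, closed C -> subset S C -> C y.

Definition irreducible_closed (Z : X -> Prop) : Prop :=
  closed Z /\ (exists z, Z z) /\
  (forall C1 C2, closed C1 -> closed C2 ->
     subset Z (fun x => C1 x \/ C2 x) -> subset Z C1 \/ subset Z C2).

Definition spectral : Prop :=
  (forall x y, (forall U, op U -> (U x <-> U y)) -> x = y) /\
  quasi_compact (fun _ => True) /\
  (forall U V, op U -> quasi_compact U -> op V -> quasi_compact V ->
     quasi_compact (fun x => U x /\ V x)) /\
  (forall U, op U -> forall x, U x ->
     exists V, op V /\ quasi_compact V /\ V x /\ subset V U) /\
  (forall Z, irreducible_closed Z ->
     exists x, forall y, Z y <-> closure (fun z => z = x) y).

Definition dual_open (Y : X -> Prop) : Prop :=
  exists F : (X -> Prop) -> Prop,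
    (forall W, F W -> op (compl W) /\ quasi_compact (compl W)) /\
    (forall x, Y x <-> exists W, F W /\ W x).
End Topology.

Definition continuous (X Y : Type) (opX : (X -> Prop) -> Prop)
  (opY : (Y -> Prop) -> Prop) (f : X -> Y) : Prop :=
  forall U, opY U -> opX (fun x => U (f x)).

Definition homeomorphism (X Y : Type) (opX : (X -> Prop) -> Prop)
  (opY : (Y -> Prop) -> Prop) (f : X -> Y) : Prop :=
  exists g : Y -> X, (forall x, g (f x) = x) /\ (forall y, f (g y) = y) /\
    continuous opX opY f /\ continuous opY opX g.

Section SpecStar.
Variable L : IdealLattice.

Definition zariski_open (U : Spec L -> Prop) : Prop :=
  exists a : L, forall p, U p <-> supp a p.

Definition star_open (U : Spec L -> Prop) : Prop :=
  dual_open zariski_open U.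
End SpecStar.

Section Support.
Variables (L : IdealLattice) (X : Type) (op : (X -> Prop) -> Prop)
          (sigma : L -> X -> Prop).

Definition support_datum : Prop :=
  (forall a : L, compact a -> closed op (sigma a)) /\
  (forall a b : L, compact a -> compact b ->
     forall x, sigma (join a b) x <-> (sigma a x \/ sigma b x)) /\
  (forall x, sigma (top L) x) /\
  (forall a b : L, compact a -> compact b ->
     forall x, sigma (imul a b) x <-> (sigma a x /\ sigma b x)).

Definition phi_map (a : L) : X -> Prop :=
  fun x => exists b : L, compact b /\ ile b a /\ sigma b x.

Definition psi_map (Y : X -> Prop) : L :=
  isup (fun b : L => compact b /\ subset (sigma b) Y).

Definition classifying : Prop :=
  spectral op /\
  (forall a : L, semiprime a -> dual_open op (phi_map a) /\ psi_map (phi_map a) = a) /\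
  (forall Y, dual_open op Y ->
     semiprime (psi_map Y) /\ (forall x, phi_map (psi_map Y) x <-> Y x)).
End Support.

(* Main.v *)
Require Import Defs.
From mathcomp Require classical_sets boolp.
From Stdlib Require Import Classical FunctionalExtensionality PropExtensionality ProofIrrelevance List Lia ClassicalEpsilon.
Import ListNotations.

Lemma zorn_prop (T : Type) (R : T -> T -> Prop) :
  (forall t, R t t) -> (forall r s t, R r s -> R s t -> R r t) ->
  (forall s t, R s t -> R t s -> s = t) ->
  (forall A : T -> Prop, (forall s t, A s -> A t -> R s t \/ R t s) -> exists u, forall s, A s -> R s u) ->
  exists m, forall s, R m s -> s = m.
Proof.
  intros Hr Ht Ha Hc.
  pose (R' := fun s t => boolp.asbool (R s t)).
  assert (E : forall s t, is_true (R' s t) <-> R s t).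
  { intros s t. unfold R'. destruct (boolp.asboolP (R s t)); split; intro; auto; discriminate. }
  destruct (@classical_sets.Zorn T R') as [m Hm].
  - intro t; apply E; auto.
  - intros r s t H1 H2; apply E; apply E in H1; apply E in H2; eauto.
  - intros s t H1 H2; apply E in H1; apply E in H2; auto.
  - intros A HA. destruct (Hc A) as [u Hu].
    + intros s t As At. destruct (HA s t As At) as [h|h]; [left|right]; apply E; exact h.
    + exists u. intros s As. apply E. auto.
  - exists m. intros s Hs. apply Hm. apply E. exact Hs.
Qed.

Lemma zorn_pred (T : Type) (P : T -> Prop) (R : T -> T -> Prop) :
  (forall t, R t t) -> (forall r s t, R r s -> R s t -> R r t) ->
  (forall s t, P s -> P t -> R s t -> R t s -> s = t) ->
  (forall A : T -> Prop, (forall a, A a -> P a) ->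
     (forall s t, A s -> A t -> R s t \/ R t s) -> exists u, P u /\ forall s, A s -> R s u) ->
  exists m, P m /\ forall s, P s -> R m s -> s = m.
Proof.
  intros Hr Ht Ha Hc.
  pose (S := {t | P t}).
  destruct (@zorn_prop S (fun s t => R (proj1_sig s) (proj1_sig t))) as [[m Pm] Hm].
  - intros; apply Hr.
  - intros r s t; apply Ht.
  - intros [s Ps] [t Pt] H1 H2. simpl in *.
    pose proof (Ha s t Ps Pt H1 H2). subst. f_equal. apply proof_irrelevance.
  - intros A HA. destruct (Hc (fun t => exists (Pt : P t), A (exist _ t Pt))) as [u [Pu Hu]].
    + intros a [Pa _]; exact Pa.
    + intros s t [Ps As] [Pt At]. exact (HA _ _ As At).
    + exists (exist _ u Pu). intros [s Ps] As. simpl. apply Hu. exists Ps. exact As.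
  - exists m. split; [exact Pm|]. intros s Ps Rs.
    pose proof (Hm (exist _ s Ps) Rs). inversion H. reflexivity.
Qed.

Lemma set_ext {T : Type} (A B : T -> Prop) : (forall x, A x <-> B x) -> A = B.
Proof. intro H. apply functional_extensionality. intro x. apply propositional_extensionality. apply H. Qed.

Lemma list_choice (A B : Type) (R : A -> B -> Prop) (l : list A) :
  (forall a, In a l -> exists b, R a b) ->
  exists l', (forall b, In b l' -> exists a, In a l /\ R a b) /\
             (forall a, In a l -> exists b, In b l' /\ R a b).
Proof.
  induction l as [|a l IH]; intro H.
  - exists []. split; intros ? [].
  - destruct (H a (or_introl eq_refl)) as [b Hb].
    destruct IH as [l' [H1 H2]]. { intros a' Ha'. apply H. right. exact Ha'. }
    exists (b :: l'). split.
    + intros b' [<-|Hb']. * exists a. split; [left; reflexivity|exact Hb].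
      * destruct (H1 b' Hb') as [a' [Ha' R']]. exists a'. split; [right; exact Ha'|exact R'].
    + intros a' [<-|Ha']. * exists b. split; [left; reflexivity|exact Hb].
      * destruct (H2 a' Ha') as [b' [Hb' R']]. exists b'. split; [right; exact Hb'|exact R'].
Qed.

Section Top.
Variables (X : Type) (op : (X -> Prop) -> Prop).

Lemma qc_ext (S S' : X -> Prop) : (forall x, S x <-> S' x) -> quasi_compact op S -> quasi_compact op S'.
Proof. intros E H. rewrite <- (set_ext _ _ E). exact H. Qed.

Lemma qc_union (S1 S2 : X -> Prop) : quasi_compact op S1 -> quasi_compact op S2 ->
  quasi_compact op (fun x => S1 x \/ S2 x).
Proof.
  intros H1 H2 F HF Hcov.
  destruct (H1 F HF) as [l1 [A1 B1]]. { intros x Hx. apply Hcov. left; exact Hx. }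
  destruct (H2 F HF) as [l2 [A2 B2]]. { intros x Hx. apply Hcov. right; exact Hx. }
  exists (l1 ++ l2). split.
  - intros U HU. apply in_app_or in HU. destruct HU; auto.
  - intros x [Hx|Hx].
    + destruct (B1 x Hx) as [U [HU Ux]]. exists U. split; [apply in_or_app; left; exact HU|exact Ux].
    + destruct (B2 x Hx) as [U [HU Ux]]. exists U. split; [apply in_or_app; right; exact HU|exact Ux].
Qed.

Lemma qc_empty : quasi_compact op (fun _ => False).
Proof. intros F _ _. exists []. split; [intros ? []| intros ? []]. Qed.

Lemma compl_compl (S : X -> Prop) : compl (compl S) = S.
Proof. apply set_ext. intro x. unfold compl. split; [apply NNPP| auto]. Qed.

End Top.

Lemma qc_image (A B : Type) (opA : (A -> Prop) -> Prop) (opB : (B -> Prop) -> Prop) (h : A -> B)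
  (S : A -> Prop) : continuous opA opB h -> quasi_compact opA S ->
  quasi_compact opB (fun b => exists a, S a /\ h a = b).
Proof.
  intros Hc Hq F HF Hcov.
  destruct (Hq (fun (U' : A -> Prop) => exists U : B -> Prop, F U /\ U' = (fun a => U (h a)))) as [l' [L1 L2]].
  - intros U' [U [FU ->]]. apply Hc. apply HF. exact FU.
  - intros a Sa. destruct (Hcov (h a)) as [U [FU Ua]]. { exists a. split; auto. }
    exists (fun a => U (h a)). split; [exists U; split; auto| exact Ua].
  - destruct (@list_choice _ _ (fun (U' : A -> Prop) (U : B -> Prop) => F U /\ U' = (fun a => U (h a))) l') as [l [M1 M2]].
    { intros U' HU'. exact (L1 U' HU'). }
    exists l. split.
    + intros U HU. destruct (M1 U HU) as [U' [_ [FU _]]]. exact FU.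
    + intros b [a [Sa <-]]. destruct (L2 a Sa) as [U' [HU' U'a]].
      destruct (M2 U' HU') as [U [HU [_ E]]]. subst U'. exists U. split; auto.
Qed.

Lemma spectral_transport (X Y : Type) (opX : (X -> Prop) -> Prop) (opY : (Y -> Prop) -> Prop)
  (f : X -> Y) (g : Y -> X) : (forall x, g (f x) = x) -> (forall y, f (g y) = y) ->
  continuous opX opY f -> continuous opY opX g -> spectral opY -> spectral opX.
Proof.
  intros gf fg cf cg [T0 [Qw [Qi [Bs Gn]]]].
  assert (qcXY : forall S, quasi_compact opX S -> quasi_compact opY (fun y => S (g y))).
  { intros S HS. apply qc_ext with (fun y => exists x, S x /\ f x = y).
    - intro y. split. intros [x [Sx <-]]. rewrite gf. exact Sx. intro H. exists (g y). auto.
    - apply (@qc_image _ _ opX opY f); auto. }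
  assert (qcYX : forall S, quasi_compact opY S -> quasi_compact opX (fun x => S (f x))).
  { intros S HS. apply qc_ext with (fun x => exists y, S y /\ g y = x).
    - intro x. split. intros [y [Sy <-]]. rewrite fg. exact Sy. intro H. exists (f x). auto.
    - apply (@qc_image _ _ opY opX g); auto. }
  split; [|split; [|split; [|split]]].
  - intros x y H. rewrite <- (gf x), <- (gf y). f_equal. apply T0. intros U HU. apply (H (fun z => U (f z))). exact (cf _ HU).
  - apply qcYX in Qw. exact Qw.
  - intros U V HU QU HV QV.
    pose proof (Qi _ _ (cg _ HU) (qcXY _ QU) (cg _ HV) (qcXY _ QV)) as H.
    apply qcYX in H. apply qc_ext with (2 := H). intro x. rewrite gf. tauto.
  - intros U HU x Ux.
    destruct (Bs _ (cg _ HU) (f x)) as [V [HV [QV [Vx HVU]]]]. { simpl. rewrite gf. exact Ux. }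
    exists (fun x => V (f x)). split. apply cf; auto. split. apply qcYX; auto. split; auto.
    intros z Vz. pose proof (HVU _ Vz). simpl in H. rewrite gf in H. exact H.
  - intros Z [HZc [[z0 Hz0] Hirr]].
    destruct (Gn (fun y => Z (g y))) as [y0 Hy0].
    + split; [|split].
      * unfold closed. exact (cg _ HZc).
      * exists (f z0). rewrite gf. exact Hz0.
      * intros C1 C2 H1 H2 Hsub.
        destruct (Hirr (fun x => C1 (f x)) (fun x => C2 (f x))) as [H|H].
        -- exact (cf _ H1).
        -- exact (cf _ H2).
        -- intros z Zz. apply Hsub. rewrite gf. exact Zz.
        -- left. intros y Zy. rewrite <- (fg y). apply H. exact Zy.
        -- right. intros y Zy. rewrite <- (fg y). apply H. exact Zy.
    + exists (g y0). intro x. split.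
      * intros Zx C HC Hsub. pose proof (proj1 (Hy0 (f x))) as K. rewrite gf in K.
        specialize (K Zx (fun y => C (g y)) (cg _ HC)). cbv beta in K. rewrite gf in K. apply K.
        intros y ->. apply Hsub. reflexivity.
      * intro H. rewrite <- (gf x). apply (proj2 (Hy0 (f x))). intros C HC Hsub.
        apply (H (fun x => C (f x)) (cf _ HC)). intros z ->. rewrite fg. apply Hsub. reflexivity.
Qed.

Section Lat.
Variable L : IdealLattice.
Implicit Types a b c d m : L.
Notation le := (@ile L).
Notation mul := (@imul L).
Notation sup := (@isup L).

Lemma le_refl a : le a a. Proof. destruct (il_ax L) as (H&_). apply H. Qed.
Lemma le_trans a b c : le a b -> le b c -> le a c.
Proof. destruct (il_ax L) as (_&H&_). apply H. Qed.
Lemma le_antisym a b : le a b -> le b a -> a = b.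
Proof. destruct (il_ax L) as (_&_&H&_). apply H. Qed.
Lemma sup_ub (A : L -> Prop) a : A a -> le a (sup A).
Proof. destruct (il_ax L) as (_&_&_&H&_). apply H. Qed.
Lemma sup_lub (A : L -> Prop) b : (forall a, A a -> le a b) -> le (sup A) b.
Proof. destruct (il_ax L) as (_&_&_&_&H&_). apply H. Qed.
Lemma mul_assoc a b c : mul a (mul b c) = mul (mul a b) c.
Proof. destruct (il_ax L) as (_&_&_&_&_&H&_). apply H. Qed.
Lemma L2ax a : exists A : L -> Prop, (forall c, A c -> compact c) /\ a = sup A.
Proof. destruct (il_ax L) as (_&_&_&_&_&_&H&_). apply H. Qed.
Lemma distr_l a b c : mul a (join b c) = join (mul a b) (mul a c).
Proof. destruct (il_ax L) as (_&_&_&_&_&_&_&H&_). apply H. Qed.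
Lemma distr_r a b c : mul (join a b) c = join (mul a c) (mul b c).
Proof. destruct (il_ax L) as (_&_&_&_&_&_&_&_&H&_). apply H. Qed.
Lemma top_compact : compact (top L).
Proof. destruct (il_ax L) as (_&_&_&_&_&_&_&_&_&H&_). apply H. Qed.
Lemma mul_top_l a : mul (top L) a = a.
Proof. destruct (il_ax L) as (_&_&_&_&_&_&_&_&_&_&H&_). apply H. Qed.
Lemma mul_top_r a : mul a (top L) = a.
Proof. destruct (il_ax L) as (_&_&_&_&_&_&_&_&_&_&_&H&_). apply H. Qed.
Lemma mul_compact a b : compact a -> compact b -> compact (mul a b).
Proof. destruct (il_ax L) as (_&_&_&_&_&_&_&_&_&_&_&_&H). apply H. Qed.

Lemma join_l a b : le a (join a b).
Proof. apply sup_ub. left; reflexivity. Qed.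
Lemma join_r a b : le b (join a b).
Proof. apply sup_ub. right; reflexivity. Qed.
Lemma join_lub a b c : le a c -> le b c -> le (join a b) c.
Proof. intros. apply sup_lub. intros x [->| ->]; auto. Qed.
Lemma le_top a : le a (top L).
Proof. apply sup_ub. exact I. Qed.
Lemma sup_mono (A B : L -> Prop) : (forall x, A x -> B x) -> le (sup A) (sup B).
Proof. intro H. apply sup_lub. intros x Ax. apply sup_ub. auto. Qed.

Lemma join_eq a b : le a b -> join a b = b.
Proof. intro H. apply le_antisym. apply join_lub; auto using le_refl. apply join_r. Qed.

Lemma mul_mono_r a b c : le a b -> le (mul c a) (mul c b).
Proof. intro H. rewrite <- (join_eq _ _ H). rewrite distr_l. apply join_l. Qed.
Lemma mul_mono_l a b c : le a b -> le (mul a c) (mul b c).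
Proof. intro H. rewrite <- (join_eq _ _ H). rewrite distr_r. apply join_l. Qed.
Lemma mul_mono a b c d : le a b -> le c d -> le (mul a c) (mul b d).
Proof. intros. apply le_trans with (mul b c). now apply mul_mono_l. now apply mul_mono_r. Qed.
Lemma mul_le_l a b : le (mul a b) a.
Proof. rewrite <- (mul_top_r a) at 2. apply mul_mono_r. apply le_top. Qed.
Lemma mul_le_r a b : le (mul a b) b.
Proof. rewrite <- (mul_top_l b) at 2. apply mul_mono_l. apply le_top. Qed.

Definition bot : L := sup (fun _ => False).
Lemma bot_le a : le bot a.
Proof. apply sup_lub. intros _ []. Qed.
Lemma bot_compact : compact bot.
Proof. intros A _. exists []. split; [intros ? []|]. apply bot_le. Qed.

Lemma join_compact a b : compact a -> compact b -> compact (join a b).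
Proof.
  intros Ha Hb A H.
  destruct (Ha A) as [l1 [H1 K1]]. { apply le_trans with (join a b); auto using join_l. }
  destruct (Hb A) as [l2 [H2 K2]]. { apply le_trans with (join a b); auto using join_r. }
  exists (l1 ++ l2). split.
  - intros x Hx. apply in_app_or in Hx. destruct Hx; auto.
  - apply join_lub.
    + apply le_trans with (1 := K1). apply sup_mono. intros; apply in_or_app; auto.
    + apply le_trans with (1 := K2). apply sup_mono. intros; apply in_or_app; auto.
Qed.

Lemma le_compacts a b : (forall c, compact c -> le c a -> le c b) -> le a b.
Proof.
  intro H. destruct (L2ax a) as [A [HA ->]]. apply sup_lub. intros c Ac.
  apply H; auto. apply sup_ub; auto.
Qed.

Lemma not_le_compact a b : ~ le a b -> exists c, compact c /\ le c a /\ ~ le c b.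
Proof.
  intro H. apply NNPP. intro H'. apply H. apply le_compacts. intros c Hc Hca.
  apply NNPP. intro. apply H'. exists c. auto.
Qed.

Lemma prime_not_top (p : L) : prime p -> ~ le (top L) p.
Proof. intros [Hp _] H. apply Hp. apply le_antisym; auto using le_top. Qed.

Lemma prime_mul (p : L) a b : prime p -> (le (mul a b) p <-> le a p \/ le b p).
Proof.
  intros Hp. split.
  - apply (proj2 Hp).
  - intros [H|H]. + apply le_trans with a; auto using mul_le_l. + apply le_trans with b; auto using mul_le_r.
Qed.

Lemma prime_semiprime (p : L) : prime p -> semiprime p.
Proof. intros Hp b H. apply (prime_mul _ b b Hp) in H. destruct H; auto. Qed.

Definition prodl (l : list L) : L := fold_right mul (top L) l.

Lemma prodl_compact l : (forall c, In c l -> compact c) -> compact (prodl l).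
Proof.
  induction l as [|x l IH]; intro H; simpl. apply top_compact.
  apply mul_compact. apply H; left; auto. apply IH. intros; apply H; right; auto.
Qed.

Lemma prodl_le l c : In c l -> le (prodl l) c.
Proof.
  induction l as [|x l IH]; simpl. intros [].
  intros [<-|H]. apply mul_le_l. apply le_trans with (prodl l). apply mul_le_r. auto.
Qed.

Lemma prime_prodl (p : L) l : prime p -> (le (prodl l) p <-> exists c, In c l /\ le c p).
Proof.
  intros Hp. induction l as [|x l IH]; simpl.
  - split. intro H. exfalso. exact (prime_not_top _ Hp H). intros [c [[] _]].
  - rewrite prime_mul by exact Hp. rewrite IH. split.
    + intros [H|[c [Hc H]]]. exists x; auto. exists c; auto.
    + intros [c [[<-|Hc] H]]; [left|right]; auto. exists c; auto.
Qed.

Lemma prodl_app l1 l2 : prodl (l1 ++ l2) = mul (prodl l1) (prodl l2).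
Proof.
  induction l1 as [|x l IH]; simpl. rewrite mul_top_l; auto.
  rewrite IH, mul_assoc. auto.
Qed.


Lemma chain_max (a : L) (T : L -> Prop) (A : L -> Prop) (l : list L) :
  T a -> (forall y, A y -> T y) -> (forall y, T y -> le a y) ->
  (forall s t, A s -> A t -> le s t \/ le t s) ->
  (forall z, In z l -> z = a \/ A z) ->
  exists y, T y /\ (y = a \/ A y) /\ forall z, In z l -> le z y.
Proof.
  intros Ta AT Ta' Htot. induction l as [|z l IH]; intro Hl.
  - exists a. split; auto. split; auto. intros ? [].
  - destruct IH as [y [Ty [Hy Hz]]]. { intros; apply Hl; right; auto. }
    destruct (Hl z (or_introl eq_refl)) as [->|Az].
    + exists y. split; auto. split; auto. intros z' [<-|H]; auto.
    + destruct Hy as [->|Ay].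
      * exists z. split; auto. split; auto. intros z' [<-|H]. apply le_refl.
        apply le_trans with a; auto.
      * destruct (Htot z y Az Ay) as [H|H].
        -- exists y. split; auto. split; auto. intros z' [<-|H']; auto.
        -- exists z. split; auto. split; auto. intros z' [<-|H']. apply le_refl.
           apply le_trans with y; auto.
Qed.

Lemma GZ (a : L) (M : L -> Prop) :
  (forall m, M m -> compact m) -> (forall m1 m2, M m1 -> M m2 -> M (mul m1 m2)) ->
  M (top L) -> (forall m, M m -> ~ le m a) ->
  exists p, prime p /\ le a p /\ forall m, M m -> ~ le m p.
Proof.
  intros Mc Mm Mt Ma.
  pose (T := fun y => le a y /\ forall m, M m -> ~ le m y).
  destruct (@zorn_pred L T le) as [p [[Hap HpM] Hmax]].
  - apply le_refl.
  - apply le_trans.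
  - intros s t _ _. apply le_antisym.
  - intros A AT Htot.
    exists (sup (fun y => y = a \/ A y)). split.
    + split. apply sup_ub. left; auto.
      intros m Mm' Hm.
      destruct (Mc m Mm' _ Hm) as [l [Hl Hml]].
      destruct (chain_max a T A l) as [y [[_ Ty] [_ Hy]]]; auto.
      * split. apply le_refl. exact Ma.
      * intros y [? ?]; auto.
      * apply (Ty m Mm'). apply le_trans with (1 := Hml). apply sup_lub. auto.
    + intros s As. apply sup_ub. right; auto.
  - exists p. split; [|split; auto].
    assert (Hnot : forall x, ~ le x p -> exists m, M m /\ le m (join p x)).
    { intros x Hx. apply NNPP. intro H. apply Hx.
      assert (E : join p x = p).
      { apply Hmax. split. apply le_trans with p; auto using join_l.
        intros m Mm' Hm. apply H. exists m; auto. apply join_l. }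
      rewrite <- E. apply join_r. }
    split.
    + intro E. apply (HpM _ Mt). rewrite E. apply le_refl.
    + intros x y Hxy. apply NNPP. intro H. apply not_or_and in H. destruct H as [Hx Hy].
      destruct (Hnot x Hx) as [m1 [M1 H1]]. destruct (Hnot y Hy) as [m2 [M2 H2]].
      apply (HpM _ (Mm _ _ M1 M2)).
      apply le_trans with (mul (join p x) (join p y)). apply mul_mono; auto.
      rewrite distr_r. apply join_lub. apply mul_le_l.
      rewrite distr_l. apply join_lub. apply mul_le_r. exact Hxy.
Qed.

Fixpoint pw (b : L) (n : nat) : L := match n with O => b | S n => mul (pw b n) (pw b n) end.

Lemma pw_compact b n : compact b -> compact (pw b n).
Proof. intro H. induction n; simpl; auto using mul_compact. Qed.

Lemma pw_anti b n k : (n <= k)%nat -> le (pw b k) (pw b n).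
Proof. induction 1. apply le_refl. simpl. apply le_trans with (pw b m); auto using mul_le_l. Qed.

Lemma Z1' (a b : L) : compact b -> (forall n, ~ le (pw b n) a) ->
  exists p, prime p /\ le a p /\ ~ le b p.
Proof.
  intros Hb Hn.
  destruct (GZ a (fun m => compact m /\ exists n, le (pw b n) m)) as [p [Hp [Hap HM]]].
  - intros m [H _]; exact H.
  - intros m1 m2 [C1 [n1 H1]] [C2 [n2 H2]]. split. apply mul_compact; auto.
    exists (S (Nat.max n1 n2)). simpl. apply mul_mono.
    apply le_trans with (2 := H1). apply pw_anti. lia.
    apply le_trans with (2 := H2). apply pw_anti. lia.
  - split. apply top_compact. exists O. apply le_top.
  - intros m [_ [n H]] Hm. apply (Hn n). apply le_trans with m; auto.
  - exists p. split; auto. split; auto. intro H. apply (HM b). split; auto. exists O. apply le_refl. exact H.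
Qed.

Lemma Z1 (a b : L) : semiprime a -> compact b -> ~ le b a ->
  exists p, prime p /\ le a p /\ ~ le b p.
Proof.
  intros Ha Hb Hba. apply Z1'; auto. intros n. induction n; simpl; auto.
Qed.

Definition rad (a : L) : L := sup (fun b => forall p : L, prime p -> le a p -> le b p).
Lemma rad_prime a (p : L) : prime p -> (le (rad a) p <-> le a p).
Proof.
  intro Hp. split; intro H.
  - apply le_trans with (2 := H). apply sup_ub. auto.
  - apply sup_lub. intros b Hb. auto.
Qed.
Lemma rad_semiprime a : semiprime (rad a).
Proof.
  intros b Hb. apply sup_ub. intros p Hp Hap.
  assert (le (mul b b) p). { apply le_trans with (1 := Hb). apply rad_prime; auto. }
  apply (prime_mul _ b b Hp) in H. destruct H; auto.
Qed.

Definition Vc (c : L) : Spec L -> Prop := fun p => le c (proj1_sig p).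

Lemma spec_eq (p q : Spec L) : proj1_sig p = proj1_sig q -> p = q.
Proof. destruct p, q. simpl. intros ->. f_equal. apply proof_irrelevance. Qed.

Lemma zar_qc_supp (c : L) : compact c -> quasi_compact (@zariski_open L) (supp c).
Proof.
  intros Hc F HF Hcov.
  pose (A := fun a => exists U, F U /\ forall p, U p <-> supp a p).
  destruct (classic (exists n, le (pw c n) (sup A))) as [[n Hn]|Hn].
  - destruct (pw_compact _ n Hc _ Hn) as [la [Hla Hle]].
    destruct (@list_choice _ _ (fun a U => F U /\ forall p, U p <-> supp a p) la) as [lU [M1 M2]].
    { intros a Ha. exact (Hla a Ha). }
    exists lU. split.
    + intros U HU. destruct (M1 U HU) as [a [_ [FU _]]]. exact FU.
    + intros p Hp. destruct p as [p Pp]. unfold supp in Hp; simpl in Hp.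
      assert (Hnp : ~ le (pw c n) p).
      { clear -Hp Pp. induction n; simpl; auto. intro H. apply IHn.
        apply (prime_mul _ _ _ Pp) in H. destruct H; auto. }
      assert (exists a, In a la /\ ~ le a p) as [a [Ha Hap]].
      { apply NNPP. intro H. apply Hnp. apply le_trans with (1 := Hle). apply sup_lub.
        intros a Ha. apply NNPP. intro. apply H. exists a; auto. }
      destruct (M2 a Ha) as [U [HU [_ E]]]. exists U. split; auto. apply E. exact Hap.
  - destruct (Z1' (sup A) c Hc) as [q [Hq [Hsq Hcq]]].
    { intros n H. apply Hn. exists n; auto. }
    destruct (Hcov (exist _ q Hq) Hcq) as [U [FU HU]].
    destruct (HF U FU) as [a Ha].
    apply Ha in HU. exfalso. apply HU. simpl. apply le_trans with (2 := Hsq). apply sup_ub.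
    exists U. split; auto.
Qed.

Notation SO := (@star_open L).
Notation ZO := (@zariski_open L).

Lemma zar_open_qc_compact (S : Spec L -> Prop) : ZO S -> quasi_compact ZO S ->
  exists c, compact c /\ forall p, S p <-> supp c p.
Proof.
  intros [a Ha] Hq.
  destruct (Hq (fun U => exists c, compact c /\ le c a /\ U = supp c)) as [l [Hl Hcov]].
  - intros U [c [_ [_ ->]]]. exists c. reflexivity.
  - intros p Sp. apply Ha in Sp. destruct (not_le_compact _ _ Sp) as [c [Hc [Hca Hcp]]].
    exists (supp c). split. exists c; auto. exact Hcp.
  - assert (Hd : forall l', (forall U, In U l' -> exists c, compact c /\ le c a /\ U = supp c) ->
      exists d, compact d /\ le d a /\ forall p, (exists U, In U l' /\ U p) -> ~ le d (proj1_sig p)).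
    { induction l' as [|U l' IH]; intro H.
      - exists bot. split. apply bot_compact. split. apply bot_le. intros p [U [[] _]].
      - destruct IH as [d [Hd [Hda Hd']]]. { intros; apply H; right; auto. }
        destruct (H U (or_introl eq_refl)) as [c [Hc [Hca ->]]].
        exists (join c d). split. apply join_compact; auto. split. apply join_lub; auto.
        intros p [U' [[<-|HU'] U'p]] Hle.
        + apply U'p. apply le_trans with (2 := Hle). apply join_l.
        + apply (Hd' p). exists U'; auto. apply le_trans with (2 := Hle). apply join_r. }
    destruct (Hd l Hl) as [d [Hdc [Hda Hdp]]].
    exists d. split; auto. intro p. split.
    + intro Sp. apply Hdp. apply Hcov. exact Sp.
    + intro H. apply Ha. intro H'. apply H. apply le_trans with a; auto.
Qed.

Lemma star_open_char (U : Spec L -> Prop) : SO U <->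
  forall p, U p -> exists c, compact c /\ le c (proj1_sig p) /\ forall q, Vc c q -> U q.
Proof.
  split.
  - intros [F [HF HU]] p Up. apply HU in Up. destruct Up as [W [FW Wp]].
    destruct (HF W FW) as [Ho Hq].
    destruct (zar_open_qc_compact _ Ho Hq) as [c [Hc E]].
    assert (E' : forall q, W q <-> le c (proj1_sig q)).
    { intro q. specialize (E q). unfold compl, supp in E. split; intro H.
      apply NNPP. intro H'. apply E in H'. auto. apply NNPP. intro H'. apply E in H'. auto. }
    exists c. split; auto. split. apply E'; auto.
    intros q Hq'. apply HU. exists W. split; auto. apply E'. exact Hq'.
  - intro H. exists (fun W => exists c, compact c /\ W = Vc c /\ forall q, Vc c q -> U q).
    split.
    + intros W [c [Hc [-> _]]]. split.
      * exists c. intro p. reflexivity.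
      * apply zar_qc_supp. exact Hc.
    + intro p. split.
      * intro Up. destruct (H p Up) as [c [Hc [Hcp HV]]]. exists (Vc c). split; auto.
        exists c. auto.
      * intros [W [[c [_ [-> HV]]] Wp]]. auto.
Qed.

Lemma Vc_open c : compact c -> SO (Vc c).
Proof. intro Hc. apply star_open_char. intros p Hp. exists c. auto. Qed.

Lemma supp_closed c : compact c -> closed SO (supp c).
Proof.
  intro Hc. unfold closed. apply star_open_char. intros p Hp. exists c. split; auto. split.
  apply NNPP. exact Hp. intros q Hq H. exact (H Hq).
Qed.

Lemma star_qc_V d : compact d -> quasi_compact SO (Vc d).
Proof.
  intros Hd F HF Hcov. apply NNPP. intro Hno.
  pose (C := fun c => compact c /\ exists U, F U /\ forall q, Vc c q -> U q).
  pose (M := fun m => compact m /\ exists l, (forall c, In c l -> C c) /\ le (prodl l) m).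
  destruct (GZ d M) as [q [Hq [Hdq HqM]]].
  - intros m [H _]; exact H.
  - intros m1 m2 [C1 [l1 [H1 K1]]] [C2 [l2 [H2 K2]]]. split. apply mul_compact; auto.
    exists (l1 ++ l2). split. intros c Hc. apply in_app_or in Hc. destruct Hc; auto.
    rewrite prodl_app. apply mul_mono; auto.
  - split. apply top_compact. exists []. split. intros ? []. apply le_refl.
  - intros m [Hm [l [Hl Hle]]] Hmd.
    destruct (@list_choice _ _ (fun c U => F U /\ forall q, Vc c q -> U q) l) as [lU [M1 M2]].
    { intros c Hc. destruct (Hl c Hc) as [_ H]. exact H. }
    apply Hno. exists lU. split.
    + intros U HU. destruct (M1 U HU) as [c [_ [FU _]]]. exact FU.
    + intros p Hp. apply NNPP. intro Hnc.
      assert (~ le (prodl l) (proj1_sig p)).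
      { rewrite prime_prodl by exact (proj2_sig p). intros [c [Hc Hcp]].
        destruct (M2 c Hc) as [U [HU [_ HV]]]. apply Hnc. exists U. split; auto. }
      apply H. apply le_trans with m; auto. apply le_trans with d; auto.
  - destruct (Hcov (exist _ q Hq) Hdq) as [U [FU Uq]].
    destruct (proj1 (star_open_char U) (HF U FU) _ Uq) as [c [Hc [Hcq HV]]].
    apply (HqM c); auto. split; auto. exists [c]. split.
    + intros c' [<-|[]]. split; auto. exists U; auto.
    + simpl. apply mul_le_l.
Qed.

Lemma qc_listV (l : list L) : (forall c, In c l -> compact c) ->
  quasi_compact SO (fun p => exists c, In c l /\ le c (proj1_sig p)).
Proof.
  induction l as [|c l IH]; intro H.
  - apply qc_ext with (fun _ => False). intros p; split. intros []. intros [c [[] _]].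
    apply qc_empty.
  - apply qc_ext with (fun p => Vc c p \/ exists c', In c' l /\ le c' (proj1_sig p)).
    + intro p. split.
      * intros [Hp|[c' [Hc' Hp]]]. exists c; split; auto. left; auto. exists c'; split; auto. right; auto.
      * intros [c' [[<-|Hc'] Hp]]. left; auto. right; exists c'; auto.
    + apply qc_union. apply star_qc_V. apply H; left; auto. apply IH. intros; apply H; right; auto.
Qed.

Lemma star_qc_list (U : Spec L -> Prop) : SO U -> quasi_compact SO U ->
  exists l, (forall c, In c l -> compact c) /\ forall p, U p <-> exists c, In c l /\ le c (proj1_sig p).
Proof.
  intros Ho Hq.
  destruct (Hq (fun W => exists c, compact c /\ W = Vc c /\ forall q, Vc c q -> U q)) as [lW [H1 H2]].
  - intros W [c [Hc [-> _]]]. apply Vc_open; auto.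
  - intros p Up. destruct (proj1 (star_open_char U) Ho p Up) as [c [Hc [Hcp HV]]].
    exists (Vc c). split; auto. exists c; auto.
  - destruct (@list_choice _ _ (fun W c => compact c /\ W = Vc c /\ forall q, Vc c q -> U q) lW)
      as [l [M1 M2]].
    { intros W HW. exact (H1 W HW). }
    exists l. split.
    + intros c Hc. destruct (M1 c Hc) as [W [_ [Hc' _]]]. exact Hc'.
    + intro p. split.
      * intro Up. destruct (H2 p Up) as [W [HW Wp]]. destruct (M2 W HW) as [c [Hc [_ [-> _]]]].
        exists c. auto.
      * intros [c [Hc Hcp]]. destruct (M1 c Hc) as [W [_ [_ [_ HV]]]]. apply HV. exact Hcp.
Qed.

Lemma compact_le_join m a b : compact m -> le m (join a b) ->
  exists d1 d2, compact d1 /\ compact d2 /\ le d1 a /\ le d2 b /\ le m (join d1 d2).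
Proof.
  intros Hm H.
  destruct (L2ax a) as [A [HA Ea]]. destruct (L2ax b) as [B [HB Eb]].
  destruct (Hm (fun x => A x \/ B x)) as [l [Hl Hml]].
  { apply le_trans with (1 := H). apply join_lub.
    rewrite Ea. apply sup_mono; auto. rewrite Eb. apply sup_mono; auto. }
  assert (K : forall l', (forall x, In x l' -> A x \/ B x) ->
    exists d1 d2, compact d1 /\ compact d2 /\ le d1 a /\ le d2 b /\ le (sup (fun x => In x l')) (join d1 d2)).
  { induction l' as [|x l' IH]; intro Hl'.
    - exists bot, bot. split; [apply bot_compact|]. split; [apply bot_compact|].
      split; [apply bot_le|]. split; [apply bot_le|]. apply sup_lub; intros ? [].
    - destruct IH as [d1 [d2 [C1 [C2 [D1 [D2 E]]]]]]. { intros; apply Hl'; right; auto. }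
      destruct (Hl' x (or_introl eq_refl)) as [Ax|Bx].
      + exists (join x d1), d2. split; [apply join_compact; auto|]. split; [auto|].
        split; [apply join_lub; auto; rewrite Ea; apply sup_ub; auto|]. split; [auto|].
        apply sup_lub. intros y [<-|Hy].
        * apply le_trans with (join x d1). apply join_l. apply join_l.
        * apply le_trans with (join d1 d2). apply le_trans with (2 := E). apply sup_ub; auto.
          apply join_lub. apply le_trans with (join x d1). apply join_r. apply join_l. apply join_r.
      + exists d1, (join x d2). split; [auto|]. split; [apply join_compact; auto|].
        split; [auto|]. split; [apply join_lub; auto; rewrite Eb; apply sup_ub; auto|].
        apply sup_lub. intros y [<-|Hy].
        * apply le_trans with (join x d2). apply join_l. apply join_r.
        * apply le_trans with (join d1 d2). apply le_trans with (2 := E). apply sup_ub; auto.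
          apply join_lub. apply join_l. apply le_trans with (join x d2). apply join_r. apply join_r. }
  destruct (K l Hl) as [d1 [d2 [C1 [C2 [D1 [D2 E]]]]]].
  exists d1, d2. repeat split; auto. apply le_trans with (1 := Hml). exact E.
Qed.

Lemma star_T0 (p q : Spec L) : (forall U, SO U -> (U p <-> U q)) -> p = q.
Proof.
  intro H. apply spec_eq. apply le_antisym; apply le_compacts; intros c Hc Hcp.
  - apply (H (Vc c) (Vc_open _ Hc)). exact Hcp.
  - apply (H (Vc c) (Vc_open _ Hc)). exact Hcp.
Qed.

Lemma star_generic (Z : Spec L -> Prop) : irreducible_closed SO Z ->
  exists x, forall y, Z y <-> closure SO (fun z => z = x) y.
Proof.
  intros [HZc [[z0 Hz0] Hirr]].
  pose (M := fun m => compact m /\ forall p, Z p -> ~ le m (proj1_sig p)).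
  assert (Mc : forall m, M m -> compact m). { intros m [H _]; exact H. }
  assert (Mm : forall m1 m2, M m1 -> M m2 -> M (mul m1 m2)).
  { intros m1 m2 [C1 H1] [C2 H2]. split. apply mul_compact; auto.
    intros p Zp Hle. apply (prime_mul _ _ _ (proj2_sig p)) in Hle. destruct Hle as [Hle|Hle].
    exact (H1 p Zp Hle). exact (H2 p Zp Hle). }
  assert (Mt : M (top L)). { split. apply top_compact. intros p _. apply prime_not_top. exact (proj2_sig p). }
  assert (inZ : forall q (Hq : prime q), (forall m, M m -> ~ le m q) -> Z (exist _ q Hq)).
  { intros q Hq HM. apply NNPP. intro HnZ.
    destruct (proj1 (star_open_char _) HZc _ HnZ) as [c [Hc [Hcq HV]]].
    apply (HM c); auto. split; auto. intros p Zp Hcp. exact (HV p Hcp Zp). }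
  assert (dir2 : forall p1 p2, Z p1 -> Z p2 -> exists p, Z p /\ le (proj1_sig p1) (proj1_sig p) /\
                                                         le (proj1_sig p2) (proj1_sig p)).
  { intros p1 p2 Z1 Z2.
    destruct (GZ (join (proj1_sig p1) (proj1_sig p2)) M) as [q [Hq [Hjq HqM]]]; auto.
    - intros m [Hm HmZ] Hle.
      destruct (compact_le_join _ _ _ Hm Hle) as [d1 [d2 [Cd1 [Cd2 [D1 [D2 E]]]]]].
      destruct (Hirr (supp d1) (supp d2) (supp_closed _ Cd1) (supp_closed _ Cd2)) as [H|H].
      + intros r Zr. apply NNPP. intro Hn. apply not_or_and in Hn. destruct Hn as [N1 N2].
        apply (HmZ r Zr). apply le_trans with (1 := E). unfold supp in N1, N2.
        apply join_lub; apply NNPP; auto.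
      + apply (H p1 Z1). exact D1.
      + apply (H p2 Z2). exact D2.
    - exists (exist _ q Hq). split. apply inZ; auto. simpl. split.
      apply le_trans with (2 := Hjq). apply join_l. apply le_trans with (2 := Hjq). apply join_r. }
  pose (S := fun y => exists p, Z p /\ proj1_sig p = y).
  assert (dirl : forall l, (forall y, In y l -> S y) -> exists p, Z p /\ forall y, In y l -> le y (proj1_sig p)).
  { induction l as [|y l IH]; intro Hl.
    - exists z0. split; auto. intros ? [].
    - destruct IH as [p [Zp Hp]]. { intros; apply Hl; right; auto. }
      destruct (Hl y (or_introl eq_refl)) as [p' [Zp' <-]].
      destruct (dir2 p p' Zp Zp') as [r [Zr [R1 R2]]].
      exists r. split; auto. intros y [<-|Hy]. exact R2. apply le_trans with (proj1_sig p); auto. }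
  destruct (GZ (sup S) M) as [q [Hq [HSq HqM]]]; auto.
  { intros m [Hm HmZ] Hle. destruct (Hm S Hle) as [l [Hl Hml]].
    destruct (dirl l Hl) as [p [Zp Hp]]. apply (HmZ p Zp). apply le_trans with (1 := Hml).
    apply sup_lub. exact Hp. }
  exists (exist _ q Hq). intro y. split.
  - intros Zy C HC Hsub. apply NNPP. intro HnC.
    destruct (proj1 (star_open_char _) HC _ HnC) as [c [Hc [Hcy HV]]].
    apply (HV (exist _ q Hq)).
    + unfold Vc. simpl. apply le_trans with (1 := Hcy). apply le_trans with (2 := HSq).
      apply sup_ub. exists y; auto.
    + apply Hsub. reflexivity.
  - intro H. apply H. exact HZc. intros z ->. apply inZ. exact HqM.
Qed.

Lemma star_spectral : spectral SO.
Proof.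
  split; [|split; [|split; [|split]]].
  - exact star_T0.
  - apply qc_ext with (Vc bot). intros p; split; auto. intros _. apply bot_le.
    apply star_qc_V. apply bot_compact.
  - intros U V HU QU HV QV.
    destruct (star_qc_list _ HU QU) as [lu [Cu Eu]]. destruct (star_qc_list _ HV QV) as [lv [Cv Ev]].
    apply qc_ext with (fun p => exists c, In c (flat_map (fun c => map (join c) lv) lu) /\ le c (proj1_sig p)).
    + intro p. rewrite Eu, Ev. split.
      * intros [e [He Hep]]. apply in_flat_map in He. destruct He as [c [Hc He]].
        apply in_map_iff in He. destruct He as [d [<- Hd]].
        split. exists c. split; auto. apply le_trans with (2 := Hep). apply join_l.
        exists d. split; auto. apply le_trans with (2 := Hep). apply join_r.
      * intros [[c [Hc Hcp]] [d [Hd Hdp]]]. exists (join c d). split.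
        apply in_flat_map. exists c. split; auto. apply in_map_iff. exists d. auto.
        apply join_lub; auto.
    + apply qc_listV. intros e He. apply in_flat_map in He. destruct He as [c [Hc He]].
      apply in_map_iff in He. destruct He as [d [<- Hd]]. apply join_compact; auto.
  - intros U HU p Up. destruct (proj1 (star_open_char U) HU p Up) as [c [Hc [Hcp HV]]].
    exists (Vc c). split. apply Vc_open; auto. split. apply star_qc_V; auto. split; auto.
  - exact star_generic.
Qed.

Section Main.
Variables (X : Type) (opX : (X -> Prop) -> Prop).
Hypothesis HX : is_topology opX.
Variable sigma : L -> X -> Prop.
Hypothesis Hs : support_datum L opX sigma.
Variable f : X -> Spec L.
Hypothesis Hfc : continuous opX SO f.
Hypothesis Hf : forall a : L, compact a -> forall x, sigma a x <-> supp a (f x).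

Notation phi := (phi_map L sigma).
Notation psi := (psi_map L sigma).

Lemma sigma_closed c : compact c -> closed opX (sigma c).
Proof. intro Hc. destruct Hs as [H _]. apply H; auto. Qed.

Lemma sigma_iff c x : compact c -> (sigma c x <-> ~ le c (proj1_sig (f x))).
Proof. intro Hc. apply Hf; auto. Qed.

Lemma phi_char a x : phi a x <-> ~ le a (proj1_sig (f x)).
Proof.
  split.
  - intros [b [Hb [Hba Hsb]]] H. apply (sigma_iff _ _ Hb) in Hsb. apply Hsb. apply le_trans with a; auto.
  - intro H. destruct (not_le_compact _ _ H) as [c [Hc [Hca Hcx]]]. exists c. split; auto. split; auto.
    apply sigma_iff; auto.
Qed.

Lemma psi_ub (Y : X -> Prop) b : compact b -> subset (sigma b) Y -> le b (psi Y).
Proof. intros Hb H. apply sup_ub. split; auto. Qed.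

Lemma homeo_classifying : homeomorphism opX SO f -> classifying L opX sigma.
Proof.
  intros [g [gf [fg [cf cg]]]].
  split; [|split].
  - exact (@spectral_transport _ _ opX SO f g gf fg cf cg star_spectral).
  - intros a Ha. split.
    + exists (fun W => exists c, compact c /\ le c a /\ W = sigma c). split.
      * intros W [c [Hc [_ ->]]]. split. exact (sigma_closed _ Hc).
        apply qc_ext with (fun x => exists p, Vc c p /\ g p = x).
        -- intro x. split.
           ++ intros [p [Hp <-]]. unfold compl. rewrite (sigma_iff _ _ Hc). rewrite fg. intro H; exact (H Hp).
           ++ intro H. exists (f x). split; [|apply gf]. unfold Vc. apply NNPP. intro H'. apply H.
              apply sigma_iff; auto.
        -- apply (@qc_image _ _ SO opX g). exact cg. apply star_qc_V; auto.
      * intro x. split.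
        -- intros [b [Hb [Hba Hsb]]]. exists (sigma b). split; auto. exists b; auto.
        -- intros [W [[c [Hc [Hca ->]]] Hw]]. exists c; auto.
    + apply le_antisym.
      * apply sup_lub. intros b [Hb Hsub]. apply NNPP. intro Hba.
        destruct (Z1 _ _ Ha Hb Hba) as [p [Hp [Hap Hbp]]].
        pose (x := g (exist _ p Hp)). assert (fx : f x = exist _ p Hp) by apply fg.
        assert (Hsx : sigma b x). { apply sigma_iff; auto. rewrite fx. exact Hbp. }
        apply Hsub in Hsx. apply phi_char in Hsx. rewrite fx in Hsx. exact (Hsx Hap).
      * apply le_compacts. intros c Hc Hca. apply psi_ub; auto. intros x Hx. exists c. auto.
  - intros Y [Fm [HF HY]].
    assert (repr : forall W, Fm W -> exists e, compact e /\ forall x, W x <-> sigma e x).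
    { intros W FW. destruct (HF W FW) as [Ho Hq].
      assert (HSo : SO (fun p => compl W (g p))) by exact (cg _ Ho).
      assert (HSq : quasi_compact SO (fun p => compl W (g p))).
      { apply qc_ext with (fun p => exists x, compl W x /\ f x = p).
        - intro p. split. intros [x [Hx <-]]. rewrite gf. exact Hx. intro H. exists (g p). auto.
        - apply (@qc_image _ _ opX SO f); auto. }
      destruct (star_qc_list _ HSo HSq) as [l [Hl El]].
      exists (prodl l). split. apply prodl_compact; auto. intro x.
      rewrite (sigma_iff _ _ (prodl_compact _ Hl)). rewrite (prime_prodl _ _ (proj2_sig (f x))).
      specialize (El (f x)). unfold compl in El. rewrite gf in El. split.
      - intros Wx H. apply El in H. exact (H Wx).
      - intro H. apply NNPP. intro Hn. apply H. apply El. exact Hn. }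
    assert (Heq : forall x, phi (psi Y) x <-> Y x).
    { intro x. split.
      - intros [b [Hb [Hbpsi Hsb]]]. destruct (Hb _ Hbpsi) as [lb [Hlb Hble]].
        rewrite (sigma_iff _ _ Hb) in Hsb.
        assert (exists b', In b' lb /\ ~ le b' (proj1_sig (f x))) as [b' [Hb' Hb'x]].
        { apply NNPP. intro H. apply Hsb. apply le_trans with (1 := Hble). apply sup_lub.
          intros b' Hb'. apply NNPP. intro. apply H. exists b'; auto. }
        destruct (Hlb b' Hb') as [Cb' Sb']. apply Sb'. apply sigma_iff; auto.
      - intro Yx. apply HY in Yx. destruct Yx as [W [FW Wx]]. destruct (repr W FW) as [e [He Ee]].
        exists e. split; auto. split.
        + apply psi_ub; auto. intros z Hz. apply HY. exists W. split; auto. apply Ee; auto.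
        + apply Ee; auto. }
    split; auto.
    intros b Hbb. apply le_compacts. intros c Hc Hcb. apply psi_ub; auto. intros z Hz.
    apply (proj1 (Heq z)). exists (mul c c). split. apply mul_compact; auto. split.
    + apply le_trans with (2 := Hbb). apply mul_mono; auto.
    + rewrite (sigma_iff _ _ (mul_compact _ _ Hc Hc)). rewrite (sigma_iff _ _ Hc) in Hz.
      rewrite (prime_mul _ _ _ (proj2_sig (f z))). intros [H|H]; auto.
Qed.

Lemma open_full : opX (fun _ => True).
Proof. exact (proj1 HX). Qed.
Lemma open_inter (U V : X -> Prop) : opX U -> opX V -> opX (fun x => U x /\ V x).
Proof. apply (proj1 (proj2 HX)). Qed.
Lemma open_union (Fm : (X -> Prop) -> Prop) : (forall U, Fm U -> opX U) -> opX (fun x => exists U, Fm U /\ U x).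
Proof. apply (proj2 (proj2 HX)). Qed.
Lemma open_union2 (U V : X -> Prop) : opX U -> opX V -> opX (fun x => U x \/ V x).
Proof.
  intros HU HV. replace (fun x => U x \/ V x) with (fun x => exists W, (W = U \/ W = V) /\ W x).
  apply open_union. intros W [->| ->]; auto.
  apply set_ext. intro x. split. intros [W [[->| ->] H]]; auto.
  intros [H|H]. exists U; auto. exists V; auto.
Qed.

Section Fwd.
Hypothesis Hcl : classifying L opX sigma.

Lemma Hsp : spectral opX. Proof. exact (proj1 Hcl). Qed.
Lemma H2 a : semiprime a -> dual_open opX (phi a) /\ psi (phi a) = a.
Proof. apply (proj1 (proj2 Hcl)). Qed.
Lemma H3 Y : dual_open opX Y -> semiprime (psi Y) /\ (forall x, phi (psi Y) x <-> Y x).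
Proof. apply (proj2 (proj2 Hcl)). Qed.

Lemma sp_T0 x y : (forall U, opX U -> (U x <-> U y)) -> x = y.
Proof. apply (proj1 Hsp). Qed.
Lemma sp_qc : quasi_compact opX (fun _ => True).
Proof. apply (proj1 (proj2 Hsp)). Qed.
Lemma sp_inter U V : opX U -> quasi_compact opX U -> opX V -> quasi_compact opX V ->
     quasi_compact opX (fun x => U x /\ V x).
Proof. apply (proj1 (proj2 (proj2 Hsp))). Qed.
Lemma sp_basis U : opX U -> forall x, U x ->
     exists V, opX V /\ quasi_compact opX V /\ V x /\ subset V U.
Proof. apply (proj1 (proj2 (proj2 (proj2 Hsp)))). Qed.
Lemma sp_gen Z : irreducible_closed opX Z ->
     exists x, forall y, Z y <-> closure opX (fun z => z = x) y.
Proof. apply (proj2 (proj2 (proj2 (proj2 Hsp)))). Qed.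

Lemma thomason_compl V : opX V -> quasi_compact opX V -> dual_open opX (compl V).
Proof.
  intros HV QV. exists (fun W => W = compl V). split.
  - intros W ->. rewrite compl_compl. auto.
  - intro x. split. intro H. exists (compl V). auto. intros [W [-> H]]. exact H.
Qed.

Lemma key_V V x0 : opX V -> quasi_compact opX V -> V x0 ->
  le (psi (compl V)) (proj1_sig (f x0)) /\ forall x, ~ V x -> ~ le (psi (compl V)) (proj1_sig (f x)).
Proof.
  intros HV QV Vx0. destruct (H3 _ (thomason_compl _ HV QV)) as [_ E]. split.
  - apply NNPP. intro H. apply phi_char in H. apply E in H. exact (H Vx0).
  - intros x nV. apply phi_char. apply E. exact nV.
Qed.

Lemma f_inj x y : f x = f y -> x = y.
Proof.
  intro Exy.
  assert (sep : forall x y U, opX U -> U x -> ~ U y -> f x <> f y).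
  { intros x' y' U HU Ux nUy E.
    destruct (sp_basis _ HU _ Ux) as [V [HV [QV [Vx VU]]]].
    destruct (key_V _ _ HV QV Vx) as [K1 K2]. apply (K2 y'). intro Vy. exact (nUy (VU _ Vy)).
    rewrite <- E. exact K1. }
  apply sp_T0. intros U HU. split; intro H; apply NNPP; intro H'.
  - exact (sep x y U HU H H' Exy).
  - exact (sep y x U HU H H' (eq_sym Exy)).
Qed.

Lemma upclosed V x y : opX V -> V x -> le (proj1_sig (f x)) (proj1_sig (f y)) -> V y.
Proof.
  intros HV Vx Hle. apply NNPP. intro nVy.
  destruct (sp_basis _ HV _ Vx) as [V' [HV' [QV' [V'x V'V]]]].
  destruct (key_V _ _ HV' QV' V'x) as [K1 K2]. apply (K2 y). intro H. exact (nVy (V'V _ H)).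
  apply le_trans with (1 := K1). exact Hle.
Qed.

Lemma f_surj (p : Spec L) : exists x, f x = p.
Proof.
  destruct p as [P HP].
  destruct (H2 _ (prime_semiprime _ HP)) as [HdPh HpsiP].
  assert (dP : forall d, compact d -> subset (sigma d) (phi P) -> le d P).
  { intros d Hd H. rewrite <- HpsiP. apply psi_ub; auto. }
  pose (A := fun x => le (proj1_sig (f x)) P).
  assert (disj : forall V, opX V -> quasi_compact opX V -> (forall x, V x -> ~ A x) ->
     exists d, compact d /\ ~ le d P /\ forall x, V x -> ~ sigma d x).
  { intros V HV QV Hdis.
    destruct (QV (fun U => exists d, compact d /\ ~ le d P /\ U = compl (sigma d))) as [lU [H1 H2']].
    - intros U [d [Hd [_ ->]]]. exact (sigma_closed _ Hd).
    - intros x Vx. destruct (not_le_compact _ _ (Hdis x Vx)) as [d [Hd [Hdx HdP]]].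
      exists (compl (sigma d)). split. exists d; auto. unfold compl. rewrite sigma_iff; auto.
    - destruct (@list_choice _ _ (fun U d => compact d /\ ~ le d P /\ U = compl (sigma d)) lU) as [ld [M1 M2]].
      { intros U HU. exact (H1 U HU). }
      assert (Hpc : compact (prodl ld)).
      { apply prodl_compact. intros d Hd. destruct (M1 d Hd) as [U [_ [Hd' _]]]. exact Hd'. }
      exists (prodl ld). split; auto. split.
      + rewrite (prime_prodl _ _ HP). intros [d [Hd HdP]]. destruct (M1 d Hd) as [_ [_ [_ [H _]]]].
        exact (H HdP).
      + intros x Vx Hsx. destruct (H2' x Vx) as [U [HU Ux]]. destruct (M2 U HU) as [d [Hd [Cd [_ ->]]]].
        unfold compl in Ux. rewrite (sigma_iff _ _ Cd) in Ux. rewrite (sigma_iff _ _ Hpc) in Hsx.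
        apply Hsx. apply le_trans with d. apply prodl_le; auto. apply NNPP; auto. }
  assert (HAc : closed opX A).
  { unfold closed.
    replace (compl A) with (fun x => exists U, (exists d, compact d /\ ~ le d P /\ U = compl (sigma d)) /\ U x).
    - apply open_union. intros U [d [Hd [_ ->]]]. exact (sigma_closed _ Hd).
    - apply set_ext. intro x. unfold compl, A. split.
      + intros [U [[d [Hd [HdP ->]]] Ux]] H. apply Ux. apply sigma_iff; auto. intro H'.
        apply HdP. apply le_trans with (1 := H'); auto.
      + intro H. destruct (not_le_compact _ _ H) as [d [Hd [Hdx HdP]]]. exists (compl (sigma d)).
        split. exists d; auto. unfold compl. rewrite sigma_iff; auto. }
  assert (outside : forall V x1, opX V -> quasi_compact opX V -> V x1 -> A x1 -> forall x, ~ V x -> phi P x).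
  { intros V x1 HV QV Vx1 Ax1 x nVx. destruct (key_V _ _ HV QV Vx1) as [K1 K2].
    apply phi_char. intro H. apply (K2 x nVx). apply le_trans with P; auto. apply le_trans with (1 := K1). exact Ax1. }
  assert (Ane : exists z, A z).
  { apply NNPP. intro Hne. destruct (disj _ open_full sp_qc) as [d [Hd [HdP Hsd]]].
    - intros x _ Ax. apply Hne. exists x. exact Ax.
    - apply HdP. apply dP; auto. intros x Hx. exfalso. exact (Hsd x I Hx). }
  assert (Airr : forall C1 C2, closed opX C1 -> closed opX C2 -> subset A (fun x => C1 x \/ C2 x) ->
                 subset A C1 \/ subset A C2).
  { intros C1 C2 HC1 HC2 Hsub. apply NNPP. intro Hn. apply not_or_and in Hn. destruct Hn as [N1 N2].
    assert (exists x1, A x1 /\ ~ C1 x1) as [x1 [A1 nC1]].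
    { apply NNPP. intro H. apply N1. intros x Ax. apply NNPP. intro. apply H. exists x; auto. }
    assert (exists x2, A x2 /\ ~ C2 x2) as [x2 [A2 nC2]].
    { apply NNPP. intro H. apply N2. intros x Ax. apply NNPP. intro. apply H. exists x; auto. }
    destruct (sp_basis _ HC1 _ nC1) as [V1 [HV1 [QV1 [V1x S1]]]].
    destruct (sp_basis _ HC2 _ nC2) as [V2 [HV2 [QV2 [V2x S2]]]].
    destruct (disj (fun x => V1 x /\ V2 x)) as [d [Hd [HdP Hsd]]].
    - apply open_inter; auto.
    - apply sp_inter; auto.
    - intros x [v1 v2] Ax. destruct (Hsub x Ax) as [c|c]. exact (S1 x v1 c). exact (S2 x v2 c).
    - apply HdP. apply dP; auto. intros x Hx.
      destruct (classic (V1 x)) as [v1|nv1].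
      + destruct (classic (V2 x)) as [v2|nv2].
        * exfalso. exact (Hsd x (conj v1 v2) Hx).
        * exact (outside V2 x2 HV2 QV2 V2x A2 x nv2).
      + exact (outside V1 x1 HV1 QV1 V1x A1 x nv1). }
  destruct (sp_gen _ (conj HAc (conj Ane Airr))) as [x0 Hx0].
  assert (Ax0 : A x0). { apply (proj2 (Hx0 x0)). intros C _ H. apply H. reflexivity. }
  assert (Px0 : le P (proj1_sig (f x0))).
  { apply NNPP. intro Hn. apply (proj2 (phi_char P x0)) in Hn.
    destruct HdPh as [Fm [HF HY]]. apply HY in Hn. destruct Hn as [W [FW Wx0]].
    destruct (HF W FW) as [HoW HqW].
    assert (AW : forall y, A y -> W y).
    { intros y Ay. apply (proj1 (Hx0 y) Ay). exact HoW. intros z ->. exact Wx0. }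
    destruct (disj (compl W) HoW HqW) as [d [Hd [HdP' Hsd]]].
    - intros x nW Ax. exact (nW (AW x Ax)).
    - apply HdP'. apply dP; auto. intros x Hx. apply HY. exists W. split; auto.
      apply NNPP. intro nW. exact (Hsd x nW Hx). }
  exists x0. apply spec_eq. simpl. apply le_antisym; auto.
Qed.

Definition gmap (p : Spec L) : X := proj1_sig (constructive_indefinite_description _ (f_surj p)).
Lemma fg p : f (gmap p) = p.
Proof. unfold gmap. exact (proj2_sig (constructive_indefinite_description _ (f_surj p))). Qed.
Lemma gf x : gmap (f x) = x.
Proof. apply f_inj. apply fg. Qed.

Lemma inter_qc (l : list (X -> Prop)) : (forall W, In W l -> opX (compl W) /\ quasi_compact opX (compl W)) ->
  opX (fun x => forall W, In W l -> compl W x) /\ quasi_compact opX (fun x => forall W, In W l -> compl W x).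
Proof.
  induction l as [|W l IH]; intro H.
  - replace (fun x => forall W, In W [] -> compl W x) with (fun _ : X => True).
    split. apply open_full. apply sp_qc. apply set_ext. intro x. split; auto. intros _ W [].
  - replace (fun x => forall W', In W' (W :: l) -> compl W' x) with
      (fun x => compl W x /\ (fun x => forall W', In W' l -> compl W' x) x).
    + destruct IH as [IH1 IH2]. intros; apply H; right; auto.
      destruct (H W (or_introl eq_refl)) as [Ho Hq].
      split. apply open_inter; auto. apply sp_inter; auto.
    + apply set_ext. intro x. split.
      * intros [H1 H2'] W' [<-|HW']; auto.
      * intro H'. split. apply H'. left; auto. intros W' HW'. apply H'. right; auto.
Qed.

Lemma Vqc c : compact c -> quasi_compact opX (fun x => le c (proj1_sig (f x))).
Proof.
  intro Hc.
  destruct (H2 _ (rad_semiprime c)) as [[Fm [HF HY]] _].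
  assert (Wrep : forall W, Fm W -> forall x, phi (psi W) x <-> W x).
  { intros W FW. apply H3. exists (fun W' => W' = W). split.
    - intros W' ->. apply HF; auto.
    - intro x. split. intro Wx. exists W; auto. intros [W' [-> H]]; auto. }
  destruct (zar_qc_supp _ Hc (fun U => exists W, Fm W /\ U = supp (psi W))) as [lU [H1 H2']].
  - intros U [W [_ ->]]. exists (psi W). intro; reflexivity.
  - intros p Hp. pose (x := gmap p).
    assert (Hx : phi (rad c) x).
    { apply phi_char. unfold x. rewrite fg. rewrite rad_prime by exact (proj2_sig p). exact Hp. }
    apply HY in Hx. destruct Hx as [W [FW Wx]].
    exists (supp (psi W)). split. exists W; auto.
    apply Wrep in Wx; auto. apply phi_char in Wx. unfold x in Wx. rewrite fg in Wx. exact Wx.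
  - destruct (@list_choice _ _ (fun U W => Fm W /\ U = supp (psi W)) lU) as [lW [M1 M2]].
    { intros U HU. exact (H1 U HU). }
    assert (E : forall x, le c (proj1_sig (f x)) <-> forall W, In W lW -> compl W x).
    { intro x. split.
      - intros Hcx W HW Wx. destruct (M1 W HW) as [U [_ [FW _]]].
        assert (phi (rad c) x). { apply HY. exists W; auto. }
        apply phi_char in H. apply H. apply rad_prime. exact (proj2_sig (f x)). exact Hcx.
      - intro H. apply NNPP. intro Hn. destruct (H2' (f x) Hn) as [U [HU Ux]].
        destruct (M2 U HU) as [W [HW [FW ->]]]. apply (H W HW).
        apply (Wrep W FW). apply phi_char. exact Ux. }
    apply qc_ext with (fun x => forall W, In W lW -> compl W x).
    + intro x. rewrite E. tauto.
    + apply inter_qc. intros W HW. destruct (M1 W HW) as [U [_ [FW _]]]. apply HF; auto.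
Qed.

Lemma Gthm V x : opX V -> quasi_compact opX V -> V x ->
  exists c, compact c /\ le c (proj1_sig (f x)) /\ forall y, le c (proj1_sig (f y)) -> V y.
Proof.
  intros HV QV Vx. apply NNPP. intro Hno.
  assert (H : forall c, compact c -> le c (proj1_sig (f x)) -> exists y, le c (proj1_sig (f y)) /\ ~ V y).
  { intros c Hc Hcx. apply NNPP. intro Hn. apply Hno. exists c. split; auto. split; auto.
    intros y Hy. apply NNPP. intro nV. apply Hn. exists y; auto. }
  pose (Pc := fun C => closed opX C /\ (forall y, C y -> ~ V y) /\
          (forall c, compact c -> le c (proj1_sig (f x)) -> exists y, C y /\ le c (proj1_sig (f y)))).
  assert (PcV : Pc (compl V)).
  { split. unfold closed. rewrite compl_compl. exact HV. split. auto.
    intros c Hc Hcx. destruct (H c Hc Hcx) as [y [Hy nV]]. exists y; auto. }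
  destruct (@zorn_pred (X -> Prop) Pc (fun C D => forall y, D y -> C y)) as [Cs [PCs Hmin]].
  - auto.
  - auto.
  - intros s t _ _ H1 H2''. apply set_ext. intro y; split; auto.
  - intros Ach HA Htot.
    pose (FF := fun U => U = V \/ exists C, Ach C /\ U = compl C).
    assert (FFo : forall U, FF U -> opX U).
    { intros U [->|[C [AC ->]]]. exact HV. exact (proj1 (HA C AC)). }
    exists (fun y => ~ V y /\ forall C, Ach C -> C y). split; [split; [|split]|].
    + unfold closed.
      replace (compl (fun y => ~ V y /\ forall C, Ach C -> C y)) with (fun y => exists U, FF U /\ U y).
      * apply open_union. exact FFo.
      * apply set_ext. intro y. unfold compl. split.
        -- intros [U [[->|[C [AC ->]]] Uy]] [nV HC]. exact (nV Uy). exact (Uy (HC C AC)).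
        -- intro Hn. destruct (classic (V y)) as [Vy|nVy]. exists V. split; auto. left; auto.
           assert (exists C, Ach C /\ ~ C y) as [C [AC nC]].
           { apply NNPP. intro H'. apply Hn. split; auto. intros C AC. apply NNPP. intro. apply H'. exists C; auto. }
           exists (compl C). split; auto. right. exists C; auto.
    + intros y [nV _]; exact nV.
    + intros c Hc Hcx. apply NNPP. intro Hn.
      destruct (Vqc c Hc FF FFo) as [lU [HlU Hcov]].
      { intros y Ky. destruct (classic (V y)) as [Vy|nVy]. exists V. split; auto. left; auto.
        assert (exists C, Ach C /\ ~ C y) as [C [AC nC]].
        { apply NNPP. intro H'. apply Hn. exists y. split; auto. split; auto.
          intros C AC. apply NNPP. intro. apply H'. exists C; auto. }
        exists (compl C). split; auto. right. exists C; auto. }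
      assert (Dex : forall l, (forall U, In U l -> FF U) ->
                exists D, (D = compl V \/ Ach D) /\ forall y, D y -> forall U, In U l -> ~ U y).
      { induction l as [|U l IH]; intro Hl.
        - exists (compl V). split. left; auto. intros y _ U0 [].
        - destruct IH as [D [HD HDl]]. { intros; apply Hl; right; auto. }
          assert (PD : Pc D). { destruct HD as [->|AD]; auto. }
          destruct (Hl U (or_introl eq_refl)) as [->|[C [AC ->]]].
          + exists D. split; auto. intros y Dy U' [<-|HU']. exact (proj1 (proj2 PD) y Dy). auto.
          + destruct HD as [->|AD].
            * exists C. split; auto. intros y Cy U' [<-|HU']. intro nC; exact (nC Cy).
              apply HDl; auto. exact (proj1 (proj2 (HA C AC)) y Cy).
            * destruct (Htot C D AC AD) as [R|R].
              -- exists D. split; auto. intros y Dy U' [<-|HU']. intro nC; exact (nC (R y Dy)). auto.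
              -- exists C. split; auto. intros y Cy U' [<-|HU']. intro nC; exact (nC Cy). apply HDl; auto. }
      destruct (Dex lU HlU) as [D [HD HDl]].
      assert (PD : Pc D). { destruct HD as [->|AD]; auto. }
      destruct (proj2 (proj2 PD) c Hc Hcx) as [y [Dy Ky]].
      destruct (Hcov y Ky) as [U [HU Uy]]. exact (HDl y Dy U HU Uy).
    + intros C AC y [_ Hy]. exact (Hy C AC).
  - destruct PCs as [HCc [HCV HCm]].
    assert (Hi : forall C', closed opX C' -> ~ subset Cs C' ->
              exists c, compact c /\ le c (proj1_sig (f x)) /\ forall y, Cs y -> C' y -> ~ le c (proj1_sig (f y))).
    { intros C' HC' Hn. apply NNPP. intro Hn'. apply Hn.
      assert (PD : Pc (fun y => Cs y /\ C' y)).
      { split; [|split].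
        - unfold closed. replace (compl (fun y => Cs y /\ C' y)) with (fun y => compl Cs y \/ compl C' y).
          apply open_union2; auto. apply set_ext. intro y. unfold compl. tauto.
        - intros y [Cy _]. auto.
        - intros c Hc Hcx. apply NNPP. intro Hm. apply Hn'. exists c. split; auto. split; auto.
          intros y Cy C'y Hcy. apply Hm. exists y. auto. }
      pose proof (Hmin _ PD (fun y H => proj1 H)) as E.
      intros y Cy. rewrite <- E in Cy. exact (proj2 Cy). }
    assert (Hirr : irreducible_closed opX Cs).
    { split; [exact HCc|split].
      - destruct (HCm bot bot_compact (bot_le _)) as [y [Cy _]]. exists y; auto.
      - intros C1 C2 HC1 HC2 Hsub. apply NNPP. intro Hn. apply not_or_and in Hn. destruct Hn as [N1 N2].
        destruct (Hi C1 HC1 N1) as [c1 [Hc1 [Hc1x K1]]]. destruct (Hi C2 HC2 N2) as [c2 [Hc2 [Hc2x K2]]].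
        destruct (HCm (join c1 c2) (join_compact _ _ Hc1 Hc2) (join_lub _ _ _ Hc1x Hc2x)) as [y [Cy Hy]].
        destruct (Hsub y Cy) as [C1y|C2y].
        + apply (K1 y Cy C1y). apply le_trans with (2 := Hy). apply join_l.
        + apply (K2 y Cy C2y). apply le_trans with (2 := Hy). apply join_r. }
    destruct (sp_gen _ Hirr) as [y0 Hy0].
    assert (Cy0 : Cs y0). { apply (proj2 (Hy0 y0)). intros C _ Hs'. apply Hs'. reflexivity. }
    apply (HCV y0 Cy0). apply (upclosed V x y0 HV Vx).
    apply le_compacts. intros c Hc Hcx. apply NNPP. intro Hn.
    assert (Hsy0 : sigma c y0). { apply sigma_iff; auto. }
    destruct (HCm c Hc Hcx) as [y [Cy Hcy]].
    assert (sigma c y). { apply (proj1 (Hy0 y) Cy). exact (sigma_closed _ Hc). intros z ->. exact Hsy0. }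
    apply (sigma_iff _ _ Hc) in H0. exact (H0 Hcy).
Qed.

Lemma g_cont : continuous SO opX gmap.
Proof.
  intros U HU. apply star_open_char. intros p Up.
  destruct (sp_basis _ HU _ Up) as [V [HV [QV [Vx VU]]]].
  destruct (Gthm _ _ HV QV Vx) as [c [Hc [Hcx HcV]]]. rewrite fg in Hcx.
  exists c. split; auto. split; auto. intros q Hq. apply VU. apply HcV. rewrite fg. exact Hq.
Qed.

Lemma classifying_homeo : homeomorphism opX SO f.
Proof. exists gmap. split. exact gf. split. exact fg. split. exact Hfc. exact g_cont. Qed.

End Fwd.
End Main.
End Lat.

Theorem mainTheorem11 (L : IdealLattice) (X : Type)
  (opX : (X -> Prop) -> Prop) (HX : is_topology opX)
  (sigma : L -> X -> Prop) (Hs : support_datum L opX sigma)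
  (f : X -> Spec L)
  (Hfc : continuous opX (@star_open L) f)
  (Hf : forall a : L, compact a -> forall x, sigma a x <-> supp a (f x)) :
  classifying L opX sigma <-> homeomorphism opX (@star_open L) f.
Proof.
  split; intro H.
  - eapply classifying_homeo; eauto.
  - eapply homeo_classifying; eauto.
Qed.
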